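(* For $m\ge 3$ groups, Algorithm MULTI-GROUP is not an $(8-\varepsilon)$-approximation algorithm for the fair $k$-center problem for any $\varepsilon>0$: for every $\varepsilon>0$ there is an instance and a resolution of the algorithm's arbitrary choices (tie-breaking in GREEDY, in cluster assignment, in the choice of exchanged elements, and of the arbitrary added elements) such that the output $C^A$ satisfies $\max_{s\in S}d(s,C^A\cup C_0)>(8-\varepsilon)\,r^*_{\mathrm{fair}}$.
   Context: Fair $k$-center problem: $S$ finite with metric $d$, partitioned into groups $S_1,\dots,S_m$; given $k_{S_i}\in\mathbb{N}_0$ with $\sum_i k_{S_i}=k$ and $C_0\subseteq S$. Feasible: $C\subseteq S$, $|C\cap S_i|=k_{S_i}$ for all $i$; cost $\max_{s\in S}d(s,C\cup C_0)$ with $d(s,A)=\min_{a\in A}d(s,a)$, $d(s,\emptyset)=+\infty$; $r^*_{\mathrm{fair}}$ is the optimal cost. $\mathrm{GREEDY}(X,d,k',C')$: start with $C=\emptyset$; for $i=1,\dots,k'$ choose any $c_i\in\arg\max_{s\in X}d(s,C\cup C')$, add it to $C$; output $C$. Algorithm EXCHANGE (input: centers $\tilde c_1,\dots,\tilde c_k$, clusters $L_1,\dots,L_k$ with $\tilde c_i\in L_i$, targets $k_{S_j}$): set $\tilde k_{S_j}=\#\{i:\tilde c_i\in S_j\}$; directed graph $G$ on $\{S_1,\dots,S_m\}$ with $S_i\to S_j$ iff some $t$ has $\tilde c_t\in S_i$ and $L_t\cap S_j\ne\emptyset$. While some $\tilde k_{S_j}\neq k_{S_j}$ and there are $S_r,S_s$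 with $\tilde k_{S_r}>k_{S_r}$, $\tilde k_{S_s}<k_{S_s}$ joined by a directed path in $G$: along a shortest such path $S_{v_0}\cdots S_{v_w}$, for $l=0,\dots,w-1$ replace the center $\tilde c_t\in S_{v_l}$ of some cluster $L_t$ containing some $y\in S_{v_{l+1}}$ by $y$; update $\tilde k_{S_r}\mathrel{-}=1$, $\tilde k_{S_s}\mathrel{+}=1$, recompute $G$. Then return $\mathcal{G}=\emptyset$ if all $\tilde k_{S_j}=k_{S_j}$, else $\mathcal{G}=\mathcal{G}'\cup\{$groups reachable in $G$ from $\mathcal{G}'\}$ with $\mathcal{G}'=\{S_j:\tilde k_{S_j}>k_{S_j}\}$. Clusters never change under replacements. Algorithm MULTI-GROUP (recursive): (1) run $\mathrm{GREEDY}(S,d,k,C_0)$ to get $\tilde c_1,\dots,\tilde c_k$; if $m=1$ return them. (2) Assign each $s\in S$ to a closest center in $\{\tilde c_i\}\cup C_0$, giving clusters $L_i$ for $\tilde c_i$; apply EXCHANGE; if $\mathcal{G}=\emptyset$ return the updated centers. (3) Else let $S'=\bigcup_{i:\tilde c_i\text{ in a group of }\mathcal{G}}L_i$, $C'=\{\tilde c_i \text{ in groups not in }\mathcal{G}\}$; recursively run MULTI-GROUP on $S'\cup C'\cup C_0$ with the groups in $\mathcal{G}$ (elements of $C'\cup C_0$ assigned to an arbitrary group in $\mathcal{G}$), requested numbers $k_{S_j}$ for $S_j\in\mathcal{G}$, initial centers $C'\cup C_0$, output $\widehat C^R$. (4) Return $\widehat C^R\cup C'$ plus, for each group $S_j\notin\mathcal{G}$,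 $k_{S_j}-|C'\cap S_j|$ arbitrary further elements of $S_j$. *)

(* Defs.v *)
(* Formalization of Algorithm MULTI-GROUP (fair k-center)
   as a relation capturing all its arbitrary choices. *)
From HB Require Import structures.
From mathcomp Require Import all_boot all_order all_algebra.
Set Implicit Arguments. Unset Strict Implicit. Unset Printing Implicit Defensive.
Import Order.TTheory GRing.Theory Num.Theory.
Local Open Scope ring_scope.

Section FairKCenter.
Variable R : realFieldType.
Variable T : finType.
Variable m : nat.
Variable d : T -> T -> R.

(* Extended nonnegative values: [None] stands for +infinity. *)
Definition ole (x y : option R) : bool :=
  match x, y with
  | _, None => true
  | None, Some _ => false
  | Some a, Some b => a <= b
  end.
Definition olt (x y : option R) : bool :=
  match x, y with
  | Some a, Some b => a < b
  | Some _, None => true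
  | None, _ => false
  end.
Definition omin (x y : option R) : option R :=
  match x, y with
  | None, _ => y
  | _, None => x
  | Some a, Some b => Some (Num.min a b)
  end.
Definition omax (x y : option R) : option R :=
  match x, y with
  | None, _ => None
  | _, None => None
  | Some a, Some b => Some (Num.max a b)
  end.
Definition oscale (c : R) (x : option R) : option R :=
  match x with None => None | Some a => Some (c * a) end.

Definition is_metric : Prop :=
  [/\ forall x, d x x = 0,
      forall x y, d x y = d y x,
      forall x y, d x y = 0 -> x = y
    & forall x y z, d x z <= d x y + d y z].

(* d(s, A) = min_{a in A} d(s,a), with d(s, emptyset) = +infinity *)
Definition dist (s : T) (A : {set T}) : option R :=
  \big[omin/None]_(c in A) Some (d s c).

Definition cost (S A : {set T}) : option R :=
  \big[omax/Some 0]_(s in S) dist s A.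

(* groups are given by grp : T -> 'I_m ; S_j = [set x | grp x == j] *)
Definition feasible (grp : T -> 'I_m) (kreq : 'I_m -> nat) (C : {set T}) : bool :=
  [forall j, #|C :&: [set x | grp x == j]| == kreq j].

(* r*_fair : optimal cost over feasible C (instance point set = all of T) *)
Definition r_fair (grp : T -> 'I_m) (kreq : 'I_m -> nat) (C0 : {set T}) : option R :=
  \big[omin/None]_(C : {set T} | feasible grp kreq C) cost [set: T] (C :|: C0).

Definition ksum (kreq : 'I_m -> nat) (Gs : {set 'I_m}) : nat :=
  (\sum_(j in Gs) kreq j)%N.

Definition greedy_prefix k (cs : k.-tuple T) (i : 'I_k) : {set T} :=
  [set tnth cs j | j : 'I_k & (j < i)%N].

Definition greedy (S C' : {set T}) k (cs : k.-tuple T) : Prop :=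
  forall i : 'I_k,
    tnth cs i \in S /\
    forall x, x \in S ->
      ole (dist x (greedy_prefix cs i :|: C'))
          (dist (tnth cs i) (greedy_prefix cs i :|: C')).

Definition centers k (cs : k.-tuple T) : {set T} := [set tnth cs i | i : 'I_k].

(* Assignment of each s in S to a closest center in {c_i} u C0
   (a s = Some i : cluster L_i of c_i ; a s = None : a center of C0);
   the EXCHANGE precondition c_i \in L_i is required. *)
Definition closest_assign (S C0 : {set T}) k (cs : k.-tuple T)
    (a : T -> option 'I_k) : Prop :=
  (forall s, s \in S ->
     match a s with
     | Some i => forall c, c \in centers cs :|: C0 -> d s (tnth cs i) <= d s c
     | None => exists2 c0, c0 \in C0 &
                 forall c, c \in centers cs :|: C0 -> d s c0 <= d s c
     end)
  /\ (forall i : 'I_k, a (tnth cs i) = Some i).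

Definition cluster (S : {set T}) k (a : T -> option 'I_k) (i : 'I_k) : {set T} :=
  [set s in S | a s == Some i].

Section Exchange.
Variables (S : {set T}) (grp : T -> 'I_m) (Gs : {set 'I_m})
          (kreq : 'I_m -> nat) (k : nat) (a : T -> option 'I_k).

Definition ktilde (cs : k.-tuple T) (j : 'I_m) : nat :=
  #|[set i : 'I_k | grp (tnth cs i) == j]|.

Definition edge (cs : k.-tuple T) : rel 'I_m :=
  fun j1 j2 => [exists t : 'I_k,
                  (grp (tnth cs t) == j1) &&
                  [exists y in cluster S a t, grp y == j2]].

Definition replace_step (cs cs' : k.-tuple T) (v w : 'I_m) : Prop :=
  exists t : 'I_k, exists y : T,
    [/\ grp (tnth cs t) = v, y \in cluster S a t, grp y = w
      & forall i, tnth cs' i = if i == t then y else tnth cs i].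

Inductive chain : seq 'I_m -> k.-tuple T -> k.-tuple T -> Prop :=
| chain_one v cs : chain [:: v] cs cs
| chain_cons v w p cs cs1 cs2 :
    replace_step cs cs1 v w -> chain (w :: p) cs1 cs2 ->
    chain [:: v, w & p] cs cs2.

Definition shortest_path (e : rel 'I_m) (r s : 'I_m) (p : seq 'I_m) : Prop :=
  [/\ path e r p, last r p = s &
      forall p', path e r p' -> last r p' = s -> (size p <= size p')%N].

Definition exchange_possible (cs : k.-tuple T) : Prop :=
  exists r s, [/\ r \in Gs, s \in Gs, (kreq r < ktilde cs r)%N,
                  (ktilde cs s < kreq s)%N & connect (edge cs) r s].

Inductive exchange : k.-tuple T -> k.-tuple T -> Prop :=
| ex_stop cs : ~ exchange_possible cs -> exchange cs cs
| ex_step cs cs1 cs2 r s p :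
    r \in Gs -> s \in Gs -> (kreq r < ktilde cs r)%N -> (ktilde cs s < kreq s)%N ->
    shortest_path (edge cs) r s p ->
    chain (r :: p) cs cs1 ->
    exchange cs1 cs2 -> exchange cs cs2.

Definition exG (cs : k.-tuple T) : {set 'I_m} :=
  if [forall j in Gs, ktilde cs j == kreq j] then set0
  else [set j in Gs | [exists i in Gs,
                         (kreq i < ktilde cs i)%N && connect (edge cs) i j]].

End Exchange.

Definition Sprime (S : {set T}) (grp : T -> 'I_m) k (a : T -> option 'I_k)
    (cs : k.-tuple T) (G : {set 'I_m}) : {set T} :=
  \bigcup_(i : 'I_k | grp (tnth cs i) \in G) cluster S a i.

Definition Cprime (grp : T -> 'I_m) k (cs : k.-tuple T) (G : {set 'I_m}) : {set T} :=
  [set tnth cs i | i : 'I_k & grp (tnth cs i) \notin G].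

Definition grpset (S : {set T}) (grp : T -> 'I_m) (j : 'I_m) : {set T} :=
  [set x in S | grp x == j].

(* multigroup kreq S grp Gs C0 out : "out is a possible output of MULTI-GROUP
   on point set S, groups Gs (membership given by grp), requested numbers kreq,
   initial centers C0" *)
Inductive multigroup (kreq : 'I_m -> nat) :
    {set T} -> (T -> 'I_m) -> {set 'I_m} -> {set T} -> {set T} -> Prop :=
| mg_single S grp Gs C0 (cs : (ksum kreq Gs).-tuple T) :
    #|Gs| = 1%N -> greedy S C0 cs ->
    multigroup kreq S grp Gs C0 (centers cs)
| mg_exch S grp Gs C0 (cs cs' : (ksum kreq Gs).-tuple T) a :
    #|Gs| != 1%N -> greedy S C0 cs -> closest_assign S C0 cs a ->
    exchange S grp Gs kreq a cs cs' ->
    exG S grp Gs kreq a cs' = set0 ->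
    multigroup kreq S grp Gs C0 (centers cs')
| mg_rec S grp Gs C0 (cs cs' : (ksum kreq Gs).-tuple T) a G grp' CR
         (E : 'I_m -> {set T}) :
    #|Gs| != 1%N -> greedy S C0 cs -> closest_assign S C0 cs a ->
    exchange S grp Gs kreq a cs cs' ->
    exG S grp Gs kreq a cs' = G -> G != set0 ->
    (forall x, x \in Cprime grp cs' G :|: C0 -> grp' x \in G) ->
    (forall x, x \notin Cprime grp cs' G :|: C0 -> grp' x = grp x) ->
    multigroup kreq (Sprime S grp a cs' G :|: Cprime grp cs' G :|: C0) grp' G
               (Cprime grp cs' G :|: C0) CR ->
    (forall j, j \in Gs :\: G ->
       E j \subset grpset S grp j :\: Cprime grp cs' G /\
       #|E j| = (kreq j - #|Cprime grp cs' G :&: grpset S grp j|)%N) ->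
    multigroup kreq S grp Gs C0
               (CR :|: Cprime grp cs' G :|: \bigcup_(j in Gs :\: G) E j).

End FairKCenter.

(* Main.v *)
Require Import Defs.
From HB Require Import structures.
From mathcomp Require Import all_boot all_order all_algebra.
Set Implicit Arguments. Unset Strict Implicit. Unset Printing Implicit Defensive.
Import Order.TTheory GRing.Theory Num.Theory.
Local Open Scope ring_scope.


Section Gen.
Variable R : realFieldType.

Lemma ole_trans (x y z : option R) : ole x y -> ole y z -> ole x z.
Proof.
case: x => [a|]; case: y => [b|]; case: z => [c|] //=; exact: le_trans.
Qed.
Lemma ole_refl (x : option R) : ole x x.
Proof. by case: x => [a|] //=. Qed.
Lemma ole_minl (x y : option R) : ole (omin x y) x.
Proof. case: x => [a|]; case: y => [b|] //=; by rewrite ?ge_min ?lexx. Qed.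
Lemma ole_minr (x y : option R) : ole (omin x y) y.
Proof. case: x => [a|]; case: y => [b|] //=; by rewrite ?ge_min ?lexx ?orbT. Qed.
Lemma ole_omin (z x y : option R) : ole z x -> ole z y -> ole z (omin x y).
Proof. case: x => [a|]; case: y => [b|]; case: z => [c|] //= H1 H2; by rewrite ?le_min ?H1 ?H2. Qed.
Lemma ole_maxl (x y : option R) : ole x (omax x y).
Proof. case: x => [a|]; case: y => [b|] //=; by rewrite ?le_max ?lexx. Qed.
Lemma ole_maxr (x y : option R) : ole y (omax x y).
Proof. case: x => [a|]; case: y => [b|] //=; by rewrite ?le_max ?lexx ?orbT. Qed.
Lemma ole_omax (z x y : option R) : ole x z -> ole y z -> ole (omax x y) z.
Proof. case: x => [a|]; case: y => [b|]; case: z => [c|] //= H1 H2; by rewrite ?ge_max ?H1 ?H2. Qed.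
Lemma ole_antisym (v : R) (o : option R) : ole (Some v) o -> ole o (Some v) -> o = Some v.
Proof. case: o => [a|] //= H1 H2. by rewrite (@le_anti _ _ a v) // H1 H2. Qed.

Variable T : finType.

Lemma obigmin_le (I : finType) (P : pred I) (F : I -> option R) (c : I) :
  P c -> ole (\big[@omin R/None]_(i | P i) F i) (F c).
Proof.
move=> Pc; rewrite unlock.
have : c \in index_enum I by rewrite mem_index_enum.
elim: (index_enum I) => [|h t IH] //= ; rewrite inE => /orP [/eqP <-|ct].
  by rewrite Pc; apply: ole_minl.
case: (P h); last exact: IH.
exact: ole_trans (ole_minr _ _) (IH ct).
Qed.

Lemma obigmin_ge (I : finType) (P : pred I) (F : I -> option R) z :
  (forall i, P i -> ole z (F i)) -> ole z (\big[@omin R/None]_(i | P i) F i).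
Proof.
move=> H; apply: (big_ind (fun o => ole z o)) => //.
  by case: z {H}.
by move=> x y; apply: ole_omin.
Qed.

Lemma obigmax_ge (I : finType) (P : pred I) (F : I -> option R) (c : I) z :
  P c -> ole z (F c) -> ole z (\big[@omax R/Some 0]_(i | P i) F i).
Proof.
move=> Pc Hz; rewrite unlock.
have : c \in index_enum I by rewrite mem_index_enum.
elim: (index_enum I) => [|h t IH] //= ; rewrite inE => /orP [/eqP <-|ct].
  by rewrite Pc; apply: ole_trans Hz (ole_maxl _ _).
case: (P h); last exact: IH.
exact: ole_trans (IH ct) (ole_maxr _ _).
Qed.

Lemma obigmax_le (I : finType) (P : pred I) (F : I -> option R) z :
  ole (Some 0) z -> (forall i, P i -> ole (F i) z) -> ole (\big[@omax R/Some 0]_(i | P i) F i) z.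
Proof.
move=> H0 H; apply: (big_ind (fun o => ole o z)) => //.
by move=> x y; apply: ole_omax.
Qed.

End Gen.



Section Inst.
Variable R : realFieldType.
Variable m' : nat.
Local Notation M := m'.+3.
Local Notation T := ('I_8 + 'I_M)%type.

Definition Dtab : seq (seq nat) :=
  [:: [:: 0;1;1;2;2;2;6;10]; [:: 1;0;2;3;1;3;7;11]; [:: 1;2;0;3;3;1;5;9];
      [:: 2;3;3;0;4;4;8;8]; [:: 2;1;3;4;0;4;8;12]; [:: 2;3;1;4;4;0;4;8];
      [:: 6;7;5;8;8;4;0;4]; [:: 10;11;9;8;12;8;4;0]].
Definition Dn (i j : nat) : nat := nth 0%N (nth [::] Dtab i) j.
Definition D (x y : T) : nat :=
  match x, y with
  | inl a, inl b => Dn a b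
  | inr i, inr j => if i == j then 0%N else 100%N
  | _, _ => 100%N
  end.
Definition dd (x y : T) : R := (D x y)%:R.

Lemma all8 (P : nat -> bool) : all P (iota 0 8) -> forall a : 'I_8, P a.
Proof. by move=> /allP H a; apply: H; rewrite mem_iota /= ltn_ord. Qed.

Lemma Dn_le100 (a b : 'I_8) : (Dn a b <= 100)%N.
Proof.
have := all8 (P := fun a => all (fun b => Dn a b <= 100)%N (iota 0 8)) _ a.
by move=> /(_ (erefl _)) /allP; apply; rewrite mem_iota /= ltn_ord.
Qed.


Lemma all8_2 (P : nat -> nat -> bool) :
  all (fun a => all (P a) (iota 0 8)) (iota 0 8) -> forall a b : 'I_8, P a b.
Proof.
move=> H a b; have := all8 H a => /allP; apply; by rewrite mem_iota /= ltn_ord.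
Qed.
Lemma all8_3 (P : nat -> nat -> nat -> bool) :
  all (fun a => all (fun b => all (P a b) (iota 0 8)) (iota 0 8)) (iota 0 8) ->
  forall a b c : 'I_8, P a b c.
Proof.
move=> H a b c; have := all8_2 H a b => /allP; apply; by rewrite mem_iota /= ltn_ord.
Qed.

Lemma dd_metric : is_metric dd.
Proof.
rewrite /dd; split.
- case=> [a|j] /=; last by rewrite eqxx.
  by rewrite (eqP (all8 (P := fun a => Dn a a == 0)%N (erefl _) a)).
- case=> [a|i] [b|j] //=; last by rewrite eq_sym.
  by rewrite (eqP (all8_2 (P := fun a b => Dn a b == Dn b a)%N (erefl _) a b)).
- move=> x y /eqP; rewrite pnatr_eq0 => /eqP.
  case: x => [a|i]; case: y => [b|j] //=.
    move=> H; congr inl; apply: val_inj; apply/eqP.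
    by have := all8_2 (P := fun a b => (Dn a b == 0) ==> (a == b))%N (erefl _) a b; rewrite H.
  by case: eqP => [->|].
- move=> x y z; rewrite -natrD ler_nat.
  case: x => [a|i]; case: y => [b|j]; case: z => [c|k] /=.
  + exact: (all8_3 (P := fun a b c => Dn a c <= Dn a b + Dn b c)%N (erefl _) a b c).
  + by rewrite leq_addl.
  + by apply: leq_trans (Dn_le100 a c) _; rewrite leq_addr.
  + by case: eqP.
  + by rewrite leq_addr.
  + by case: eqP.
  + by case: eqP.
  + case: (eqVneq i k) => [->|ik] //=; case: (eqVneq i j) => [ij|] //=.
    by subst j; rewrite (negPf ik).
Qed.

Definition lift (P : pred nat) : {set T} :=
  [set x : T | match x with inl c => P c | inr _ => true end].
Definition liftN (P : pred nat) : {set T} :=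
  [set x : T | match x with inl c => P c | inr _ => false end].
Definition emb (n : nat) : T := inl (inord n).

Definition dm (a : nat) (P : pred nat) : nat :=
  foldr minn 100 [seq Dn a j | j <- iota 0 8 & P j].

Lemma foldr_minn_le (z : nat) (s : seq nat) x : x \in s -> (foldr minn z s <= x)%N.
Proof.
elim: s => //= h t IH; rewrite inE => /orP [/eqP ->|xt]; first by rewrite geq_minl.
by apply: leq_trans (geq_minr _ _) (IH xt).
Qed.
Lemma foldr_minn_lez (z : nat) (s : seq nat) : (foldr minn z s <= z)%N.
Proof. elim: s => //= h t IH; by apply: leq_trans (geq_minr _ _) IH. Qed.
Lemma foldr_minn_mem (z : nat) (s : seq nat) : foldr minn z s = z \/ foldr minn z s \in s.
Proof.
elim: s => [|h t IH]; first by left.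
rewrite [foldr _ _ (h :: t)]/=.
case: (leqP h (foldr minn z t)) => H.
  by right; rewrite inE eqxx.
case: IH => [->|]; first by left.
by move=> mt; right; rewrite inE mt orbT.
Qed.

Lemma dist_lift_inr j P : dist dd (inr j) (lift P) = Some 0.
Proof.
apply: ole_antisym.
  apply: obigmin_ge => c _ /=; by rewrite /dd ler0n.
have := @obigmin_le R _ (fun c => c \in lift P) (fun c => Some (dd (inr j) c)) (inr j).
by rewrite inE /dd /= eqxx => /(_ isT).
Qed.

Lemma dist_lift_inl (a : 'I_8) P : dist dd (inl a) (lift P) = Some (dm a P)%:R.
Proof.
apply: ole_antisym.
  apply: obigmin_ge => c; rewrite inE /= /dd ler_nat.
  case: c => [b|j] /=; last by move=> _; apply: foldr_minn_lez.
  move=> Pb; apply: foldr_minn_le; apply: map_f.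
  by rewrite mem_filter Pb mem_iota /= ltn_ord.
case: (foldr_minn_mem 100 [seq Dn a j | j <- iota 0 8 & P j]) => H.
  have := @obigmin_le R _ (fun c => c \in lift P) (fun c => Some (dd (inl a) c)) (inr ord0).
  by rewrite inE /dd /= /dm H => /(_ isT).
move: H => /mapP [j]; rewrite mem_filter mem_iota /= => /andP [Pj j8] E.
have := @obigmin_le R _ (fun c => c \in lift P) (fun c => Some (dd (inl a) c)) (inl (inord j)).
by rewrite inE /dd /= /dm E inordK // => /(_ Pj).
Qed.

Definition mkt k (l : seq nat) (H : size l == k) : k.-tuple T.
Proof. refine (@Tuple k T (map emb l) _); by rewrite size_map. Defined.

Lemma tnth_mkt k l (H : size l == k) (i : 'I_k) : tnth (mkt H) i = emb (nth 0%N l i).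
Proof.
rewrite (tnth_nth (emb 0)) /= (nth_map 0%N) //; by rewrite (eqP H) ltn_ord.
Qed.

Lemma allk k (P : nat -> bool) : all P (iota 0 k) -> forall a : 'I_k, P a.
Proof. by move=> /allP H a; apply: H; rewrite mem_iota /= ltn_ord. Qed.

Lemma inl_emb (c : 'I_8) n : (n < 8)%N -> (inl c == emb n :> T) = (val c == n).
Proof.
move=> Hn; rewrite /emb; apply/eqP/eqP => [[E]|E]; first by rewrite E /= inordK.
by congr inl; apply: val_inj; rewrite /= inordK.
Qed.

Lemma prefix_lift k l (H : size l == k) (A0 : pred nat) (i : 'I_k) :
  all (fun n => n < 8)%N l ->
  greedy_prefix (mkt H) i :|: lift A0 = lift (fun c => A0 c || (c \in take i l)).
Proof.
move=> /allP Hl; apply/setP => x; rewrite !inE.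
case: x => [c|j] /=; last by rewrite orbT.
rewrite orbC; congr orb.
apply/imsetP/idP => [[j]|].
  rewrite inE => ji; rewrite tnth_mkt => /eqP.
  have jl : (j < size l)%N by rewrite (eqP H) ltn_ord.
  rewrite inl_emb; last by apply: Hl; rewrite mem_nth.
  move=> /eqP ->; rewrite -(nth_take 0%N ji); apply: mem_nth.
  by rewrite size_take; case: ifP.
move=> /(nthP 0%N) [j]; rewrite size_take => jlt.
have ji : (j < i)%N by move: jlt; rewrite (eqP H) ltn_ord.
have jk : (j < k)%N by apply: ltn_trans ji (ltn_ord i).
rewrite nth_take // => E.
exists (Ordinal jk); first by rewrite inE.
apply/eqP; rewrite tnth_mkt inl_emb /= ?E //.
Qed.

Lemma centers_lift k l (H : size l == k) (A0 : pred nat) :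
  all (fun n => n < 8)%N l ->
  centers (mkt H) :|: lift A0 = lift (fun c => A0 c || (c \in l)).
Proof.
move=> /allP Hl; apply/setP => x; rewrite !inE.
case: x => [c|j] /=; last by rewrite orbT.
rewrite orbC; congr orb.
apply/imsetP/idP => [[j _]|].
  rewrite tnth_mkt => /eqP.
  have jl : (j < size l)%N by rewrite (eqP H) ltn_ord.
  rewrite inl_emb; last by apply: Hl; rewrite mem_nth.
  by move=> /eqP ->; apply: mem_nth.
move=> /(nthP 0%N) [j jl E].
have jk : (j < k)%N by rewrite -(eqP H).
exists (Ordinal jk) => //.
apply/eqP; rewrite tnth_mkt inl_emb /= ?E //.
Qed.

Definition pfx (A0 : pred nat) (l : seq nat) (i : nat) : pred nat :=
  fun c => A0 c || (c \in take i l).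

Lemma greedy_lift k l (H : size l == k) (S A0 : pred nat) :
  all (fun n => n < 8)%N l ->
  all (fun i => S (nth 0%N l i) &&
        all (fun c => S c ==> (dm c (pfx A0 l i) <= dm (nth 0%N l i) (pfx A0 l i))%N)
            (iota 0 8)) (iota 0 k) ->
  greedy dd (lift S) (lift A0) (mkt H).
Proof.
move=> Hl Hc i.
have /andP [Si Hx] := allk Hc i.
have li8 : (nth 0%N l i < 8)%N.
  by apply: (allP Hl); rewrite mem_nth // (eqP H).
rewrite prefix_lift // tnth_mkt /emb; split; first by rewrite inE /= inordK.
case=> [c|j]; rewrite inE /= => Sc; last by rewrite dist_lift_inr dist_lift_inl /= ler0n.
rewrite !dist_lift_inl /= ler_nat inordK //.
have := allP Hx c; rewrite mem_iota /= ltn_ord => /(_ isT) /implyP; apply; exact: Sc.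
Qed.

Lemma closest_lift k l (H : size l == k) (S A0 : pred nat) (an : nat -> option nat)
  (a : T -> option 'I_k) :
  all (fun n => n < 8)%N l ->
  (forall c : 'I_8, omap val (a (inl c)) = an c) -> (forall j, a (inr j) = None) ->
  all (fun c => S c ==> match an c with
                        | Some i => all (fun c' => (A0 c' || (c' \in l)) ==>
                                           (Dn c (nth 0%N l i) <= Dn c c')%N) (iota 0 8)
                        | None => A0 c end) (iota 0 8) ->
  all (fun i => an (nth 0%N l i) == Some i) (iota 0 k) ->
  closest_assign dd (lift S) (lift A0) (mkt H) a.
Proof.
move=> Hl Ha Hr Hc Hi; split.
  move=> s; rewrite inE; case: s => [c|j] /= Sc; last first.
    rewrite Hr; exists (inr j); first by rewrite inE.
    by move=> c' _; rewrite /dd /= eqxx ler0n.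
  have Hx0 := allP Hc c; move: Hx0; rewrite mem_iota ltn_ord Sc => /(_ isT).
  have := Ha c; case: (a (inl c)) => [i|] E; rewrite -E; last first.
    move=> A0c; exists (inl c); first by rewrite inE.
    by move=> c' _; rewrite /dd /= (eqP (all8 (P := fun a => Dn a a == 0)%N (erefl _) c)) ler0n.
  move=> Hx c'; rewrite centers_lift // inE /dd ler_nat tnth_mkt /emb.
  have li8 : (nth 0%N l i < 8)%N by apply: (allP Hl); rewrite mem_nth // (eqP H).
  case: c' => [b|j] /=; last by move=> _; apply: (Dn_le100 c (inord (nth 0%N l i))).
  idtac.
  rewrite inordK // => Hb; have := allP Hx b; rewrite mem_iota /= ltn_ord Hb.
  by move=> /(_ isT).
move=> i; rewrite tnth_mkt /emb.
have li8 : (nth 0%N l i < 8)%N by apply: (allP Hl); rewrite mem_nth // (eqP H).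
have := Ha (inord (nth 0%N l i)); rewrite inordK // (eqP (allk Hi i)).
case: (a _) => [j|] //= [E]; congr Some; exact: val_inj.
Qed.

Lemma card_nth k (Q : pred nat) (l : seq nat) : size l = k ->
  #|[set i : 'I_k | Q (nth 0%N l i)]| = count Q l.
Proof.
move=> Hs; rewrite cardsE cardE /enum_mem size_filter.
have -> : count (mem [pred i : 'I_k | Q (nth 0%N l i)]) (Finite.enum 'I_k)
   = count (fun n => Q (nth 0%N l n)) (map val (enum 'I_k)).
  by rewrite count_map enumT.
by rewrite val_enum_ord -Hs -[in RHS](mkseq_nth 0%N l) /mkseq count_map.
Qed.

Lemma nth8 k l (H : size l == k) (i : 'I_k) : all (fun n => n < 8)%N l -> (nth 0%N l i < 8)%N.
Proof. by move=> Hl; apply: (allP Hl); rewrite mem_nth // (eqP H). Qed.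

Lemma ktilde_lift k l (H : size l == k) (g : T -> 'I_M) (cgX : nat -> nat)
  (Hg : forall c : 'I_8, val (g (inl c)) = cgX c) (j : 'I_M) :
  all (fun n => n < 8)%N l ->
  ktilde g (mkt H) j = count (fun n => cgX n == val j) l.
Proof.
move=> Hl; rewrite /ktilde -(@card_nth k (fun n => cgX n == val j) l) ?(eqP H) //.
apply: eq_card => i; rewrite !inE tnth_mkt /emb -val_eqE Hg inordK //.
exact: nth8.
Qed.

Lemma mem_cluster k (S : pred nat) (an : nat -> option nat) (a : T -> option 'I_k)
  (Ha : forall c : 'I_8, omap val (a (inl c)) = an c) (Hr : forall j, a (inr j) = None)
  (t : 'I_k) (x : T) :
  x \in cluster (lift S) a t =
  match x with inl c => S c && (an c == Some (val t)) | inr _ => false end.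
Proof.
rewrite !inE; case: x => [c|j] /=; last by rewrite Hr.
congr andb; rewrite -Ha; case: (a (inl c)) => [i|] //=.
Qed.

Definition edgen (S : pred nat) (cgX : nat -> nat) (an : nat -> option nat)
  (l : seq nat) (k : nat) (u w : nat) : bool :=
  has (fun t => (cgX (nth 0%N l t) == u) &&
         has (fun c => S c && (an c == Some t) && (cgX c == w)) (iota 0 8)) (iota 0 k).

Lemma edge_lift k l (H : size l == k) (S : pred nat) (g : T -> 'I_M) (cgX : nat -> nat)
  (Hg : forall c : 'I_8, val (g (inl c)) = cgX c)
  (an : nat -> option nat) (a : T -> option 'I_k)
  (Ha : forall c : 'I_8, omap val (a (inl c)) = an c) (Hr : forall j, a (inr j) = None)
  (j1 j2 : 'I_M) :
  all (fun n => n < 8)%N l ->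
  edge (lift S) g a (mkt H) j1 j2 = edgen S cgX an l k (val j1) (val j2).
Proof.
move=> Hl; apply/existsP/hasP.
  move=> [t /andP [E1 /existsP [y /andP [yin E2]]]].
  exists (val t); first by rewrite mem_iota /= ltn_ord.
  move: E1; rewrite tnth_mkt /emb -val_eqE Hg inordK ?nth8 // => ->; rewrite andTb.
  move: yin; rewrite (mem_cluster _ Ha Hr); case: y E2 => [c|] // E2 /andP [Sc E].
  apply/hasP; exists (val c); first by rewrite mem_iota /= ltn_ord.
  by rewrite Sc E -Hg (eqP E2) eqxx.
move=> [t]; rewrite mem_iota leq0n add0n andTb => tk /andP [E1 /hasP [c]].
rewrite mem_iota leq0n add0n andTb => c8 /andP [/andP [Sc E] E2].
exists (Ordinal tk); apply/andP; split.
  by rewrite tnth_mkt /emb -val_eqE Hg inordK ?(nth8 H (Sub t tk : 'I_k)).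
apply/existsP; exists (inl (inord c)); apply/andP; split.
  by rewrite (mem_cluster _ Ha Hr) inordK // Sc E.
by rewrite -val_eqE Hg inordK.
Qed.

Lemma connect_closed (I : finType) (e : rel I) (P : pred I) :
  (forall x y, P x -> e x y -> P y) -> forall x y, P x -> connect e x y -> P y.
Proof.
move=> H x y Px /connectP [p pth ->]; elim: p x Px pth => //= z p IH x Px /andP [exz pth].
exact: IH (H _ _ Px exz) pth.
Qed.

Lemma Cprime_lift k l (H : size l == k) (g : T -> 'I_M) (cgX : nat -> nat)
  (Hg : forall c : 'I_8, val (g (inl c)) = cgX c) (G : {set 'I_M}) (Gn : pred nat)
  (HG : forall j, (j \in G) = Gn (val j)) :
  all (fun n => n < 8)%N l ->
  Cprime g (mkt H) G = liftN (fun n => (n \in l) && ~~ Gn (cgX n)).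
Proof.
move=> Hl; apply/setP => x; rewrite !inE.
apply/imsetP/idP.
  move=> [i]; rewrite inE tnth_mkt /emb HG Hg inordK ?(nth8 H) // => Hi ->.
  by rewrite /= inordK ?(nth8 H) // mem_nth ?(eqP H) // Hi.
case: x => [c|] //= /andP [/(nthP 0%N) [i il E] HGc].
have ik : (i < k)%N by rewrite -(eqP H).
exists (Ordinal ik); first by rewrite inE HG tnth_mkt /emb Hg /= E inordK.
rewrite tnth_mkt /emb /= E; congr inl; apply: val_inj; by rewrite /= inordK.
Qed.

Lemma Sprime_lift k l (H : size l == k) (S : pred nat) (g : T -> 'I_M) (cgX : nat -> nat)
  (Hg : forall c : 'I_8, val (g (inl c)) = cgX c) (G : {set 'I_M}) (Gn : pred nat)
  (HG : forall j, (j \in G) = Gn (val j))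
  (an : nat -> option nat) (a : T -> option 'I_k)
  (Ha : forall c : 'I_8, omap val (a (inl c)) = an c) (Hr : forall j, a (inr j) = None) :
  all (fun n => n < 8)%N l ->
  Sprime (lift S) g a (mkt H) G =
  liftN (fun c => S c && match an c with
                        | Some t => (t < k)%N && Gn (cgX (nth 0%N l t))
                        | None => false end).
Proof.
move=> Hl; apply/setP => x; rewrite [RHS]inE.
apply/bigcupP/idP.
  move=> [i]; rewrite HG tnth_mkt /emb Hg inordK ?(nth8 H) // => Gi.
  rewrite (mem_cluster _ Ha Hr); case: x => [c|] //= /andP [Sc /eqP ->].
  by rewrite Sc ltn_ord Gi.
case: x => [c|] //= /andP [Sc]; case E: (an c) => [t|] // /andP [tk Gt].
exists (Ordinal tk); first by rewrite HG tnth_mkt /emb Hg inordK ?(nth8 H (Ordinal tk)).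
by rewrite (mem_cluster _ Ha Hr) Sc E /= eqxx.
Qed.

Lemma card_liftN (P : pred nat) : #|liftN P| = count P (iota 0 8).
Proof.
have -> : liftN P = inl @: [set i : 'I_8 | P i].
  apply/setP => x; rewrite !inE; apply/idP/imsetP.
    by case: x => [c|] //= Pc; exists c => //; rewrite inE.
  by move=> [c]; rewrite inE => Pc ->.
rewrite card_imset; last by move=> x y [].
rewrite -(@card_nth 8 P (iota 0 8)) ?size_iota //.
by apply: eq_card => i; rewrite !inE nth_iota.
Qed.

Definition cg (n : nat) : nat := nth 0%N [:: 1; 2; 2; 2; 0; 1; 0; 1]%N n.
Definition cg2 (n : nat) : nat := if n == 3%N then 0%N else cg n.
Lemma cg_lt n : (cg n < 3)%N.
Proof. by rewrite /cg; case: n => [|[|[|[|[|[|[|[|n]]]]]]]] //=; rewrite nth_nil. Qed.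
Lemma cg2_lt n : (cg2 n < 3)%N.
Proof. rewrite /cg2; case: (n == 3%N) => //; exact: cg_lt. Qed.
Lemma lt3M n : (n < 3)%N -> (n < M)%N.
Proof. by move=> H; apply: leq_trans H _. Qed.

Definition gA : 'I_M := @Ordinal M 0 isT.
Definition gB : 'I_M := @Ordinal M 1 isT.
Definition gC : 'I_M := @Ordinal M 2 isT.
Definition grp1 (x : T) : 'I_M :=
  match x with inl c => Ordinal (lt3M (cg_lt c)) | inr j => j end.
Definition grp2 (x : T) : 'I_M :=
  match x with inl c => Ordinal (lt3M (cg2_lt c)) | inr _ => gA end.
Definition kreq (j : 'I_M) : nat := nth 0%N [:: 1; 1; 3]%N (val j).
Definition GG : {set 'I_M} := [set gA; gB].
Lemma inGG j : (j \in GG) = (val j < 2)%N.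
Proof.
rewrite !inE -!val_eqE /=; case: j => [[|[|v]] ?] //=.
Qed.
Lemma Hg1 (c : 'I_8) : val (grp1 (inl c)) = cg c. Proof. by []. Qed.
Lemma Hg2 (c : 'I_8) : val (grp2 (inl c)) = cg2 c. Proof. by []. Qed.

Definition l1 : seq nat := [:: 0; 7; 6; 5; 4]%N.
Definition l1' : seq nat := [:: 3; 7; 6; 5; 4]%N.
Definition l2 : seq nat := [:: 6; 4]%N.
Definition l2' : seq nat := [:: 5; 4]%N.
Definition H1 : size l1 == 5%N := erefl.
Definition H1' : size l1' == 5%N := erefl.
Definition H2 : size l2 == 2%N := erefl.
Definition H2' : size l2' == 2%N := erefl.
Definition cs1 := mkt H1.
Definition cs1' := mkt H1'.
Definition cs2 := mkt H2.
Definition cs2' := mkt H2'.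
Definition an1 (n : nat) : option nat :=
  nth None [:: Some 0; Some 0; Some 0; Some 0; Some 4; Some 3; Some 2; Some 1]%N n.
Definition an2 (n : nat) : option nat :=
  nth None [:: None; None; None; None; Some 1; Some 0; Some 0; Some 0]%N n.
Definition ordk (k n : nat) : 'I_k.+1 := @Ordinal k.+1 (n %% k.+1) (ltn_pmod n (ltn0Sn k)).
Definition a1 (x : T) : option 'I_5 :=
  match x with inl c => omap (ordk 4) (an1 c) | inr _ => None end.
Definition a2 (x : T) : option 'I_2 :=
  match x with inl c => omap (ordk 1) (an2 c) | inr _ => None end.
Lemma Ha1 (c : 'I_8) : omap val (a1 (inl c)) = an1 c.
Proof.
apply/eqP; apply: (all8 (P := fun n => omap val (omap (ordk 4) (an1 n)) == an1 n)).
exact: erefl.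
Qed.
Lemma Ha2 (c : 'I_8) : omap val (a2 (inl c)) = an2 c.
Proof.
apply/eqP; apply: (all8 (P := fun n => omap val (omap (ordk 1) (an2 n)) == an2 n)).
exact: erefl.
Qed.
Lemma Hr1 j : a1 (inr j) = None. Proof. by []. Qed.
Lemma Hr2 j : a2 (inr j) = None. Proof. by []. Qed.

Definition S2 (n : nat) : bool := n \in [:: 7; 6; 5; 4; 3]%N.
Definition A02 (n : nat) : bool := n == 3%N.

Lemma greedy1 : greedy dd (lift predT) (lift pred0) cs1.
Proof. apply: greedy_lift; exact: erefl. Qed.
Lemma greedy2 : greedy dd (lift S2) (lift A02) cs2.
Proof. apply: greedy_lift; exact: erefl. Qed.
Lemma closest1 : closest_assign dd (lift predT) (lift pred0) cs1 a1.
Proof. apply: (@closest_lift 5 l1 H1 predT pred0 an1 a1) => //; exact: Ha1. Qed.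
Lemma closest2 : closest_assign dd (lift S2) (lift A02) cs2 a2.
Proof. apply: (@closest_lift 2 l2 H2 S2 A02 an2 a2) => //; exact: Ha2. Qed.

Lemma edge_closed1 (x y : 'I_M) :
  (val x < 2)%N -> edge (lift predT) grp1 a1 cs1' x y -> (val y < 2)%N.
Proof.
rewrite /cs1' (@edge_lift 5 l1' H1' predT grp1 cg Hg1 an1 a1 Ha1 Hr1) //.
move: (val x) (val y) => u w.
by case: u => [|[|u]] //; case: w => [|[|[|w]]] //; vm_compute.
Qed.

Lemma over1 (r : 'I_M) : (kreq r < ktilde grp1 cs1' r)%N -> (val r < 2)%N.
Proof.
rewrite /cs1' (@ktilde_lift 5 l1' H1' grp1 cg Hg1) // /kreq.
by case: (val r) => [|[|[|v]]] //; vm_compute.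
Qed.

Lemma exstop1 : ~ exchange_possible (lift predT) grp1 [set: 'I_M] kreq a1 cs1'.
Proof.
move=> [r [s [_ _ Hr Hs Hc]]].
have Pr := over1 Hr.
have Ps : (val s < 2)%N.
  exact: (connect_closed (P := fun j : 'I_M => (val j < 2)%N) edge_closed1 Pr Hc).
move: Hs Ps; rewrite /cs1' (@ktilde_lift 5 l1' H1' grp1 cg Hg1) // /kreq.
by case: (val s) => [|[|v]] //; vm_compute.
Qed.

Lemma exchange1 : exchange (lift predT) grp1 [set: 'I_M] kreq a1 cs1 cs1'.
Proof.
apply: (@ex_step _ _ _ _ _ _ _ _ cs1 cs1' cs1' gB gC [:: gC]).
- by rewrite inE.
- by rewrite inE.
- by rewrite /cs1 (@ktilde_lift 5 l1 H1 grp1 cg Hg1).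
- by rewrite /cs1 (@ktilde_lift 5 l1 H1 grp1 cg Hg1).
- split.
  + by rewrite /= andbT /cs1 (@edge_lift 5 l1 H1 predT grp1 cg Hg1 an1 a1 Ha1 Hr1).
  + by [].
  + by case=> [|h t] //= _ /(congr1 val).
- apply: chain_cons; last exact: chain_one.
  exists ord0, (emb 3); split.
  + by apply: val_inj; rewrite /cs1 tnth_mkt /emb /= inordK.
  + by rewrite (mem_cluster _ Ha1 Hr1) /emb inordK.
  + by apply: val_inj; rewrite /emb /= inordK.
  + move=> i; rewrite /cs1 /cs1' !tnth_mkt -val_eqE /=.
    have /eqP -> := @allk 5 (fun i => nth 0%N l1' i == if i == 0%N then 3%N else nth 0%N l1 i)
      (erefl _) i.
    by case: ifP.
- by apply: ex_stop; exact: exstop1.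
Qed.

Lemma exG1 : exG (lift predT) grp1 [set: 'I_M] kreq a1 cs1' = GG.
Proof.
rewrite /exG.
have -> : [forall j in [set: 'I_M], ktilde grp1 cs1' j == kreq j] = false.
  apply/negbTE/negP => /forallP /(_ gC); rewrite inE /cs1' (@ktilde_lift 5 l1' H1' grp1 cg Hg1) //.
apply/setP => j; rewrite inGG !inE; apply/existsP/idP.
  move=> [i /andP [_ /andP [Hi Hc]]].
  exact: (connect_closed (P := fun j : 'I_M => (val j < 2)%N) edge_closed1 (over1 Hi) Hc).
move=> Hj; exists j; rewrite inE connect0 andbT /=.
move: Hj; rewrite /cs1' (@ktilde_lift 5 l1' H1' grp1 cg Hg1) // /kreq.
by case: (val j) => [|[|v]].
Qed.

Lemma exstop2 : ~ exchange_possible (lift S2) grp2 GG kreq a2 cs2'.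
Proof.
move=> [r [s [Gr _ Hr _ _]]].
move: Hr Gr; rewrite inGG /cs2' (@ktilde_lift 2 l2' H2' grp2 cg2 Hg2) // /kreq.
by case: (val r) => [|[|v]].
Qed.

Lemma exchange2 : exchange (lift S2) grp2 GG kreq a2 cs2 cs2'.
Proof.
apply: (@ex_step _ _ _ _ _ _ _ _ cs2 cs2' cs2' gA gB [:: gB]).
- by rewrite inGG.
- by rewrite inGG.
- by rewrite /cs2 (@ktilde_lift 2 l2 H2 grp2 cg2 Hg2).
- by rewrite /cs2 (@ktilde_lift 2 l2 H2 grp2 cg2 Hg2).
- split.
  + by rewrite /= andbT /cs2 (@edge_lift 2 l2 H2 S2 grp2 cg2 Hg2 an2 a2 Ha2 Hr2).
  + by [].
  + by case=> [|h t] //= _ /(congr1 val).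
- apply: chain_cons; last exact: chain_one.
  exists ord0, (emb 5); split.
  + by apply: val_inj; rewrite /cs2 tnth_mkt /emb /= inordK.
  + by rewrite (mem_cluster _ Ha2 Hr2) /emb inordK.
  + by apply: val_inj; rewrite /emb /= inordK.
  + move=> i; rewrite /cs2 /cs2' !tnth_mkt -val_eqE /=.
    have /eqP -> := @allk 2 (fun i => nth 0%N l2' i == if i == 0%N then 5%N else nth 0%N l2 i)
      (erefl _) i.
    by case: ifP.
- by apply: ex_stop; exact: exstop2.
Qed.

Lemma exG2 : exG (lift S2) grp2 GG kreq a2 cs2' = set0.
Proof.
rewrite /exG.
have -> : [forall j in GG, ktilde grp2 cs2' j == kreq j] = true.
  apply/forallP => j; apply/implyP; rewrite inGG /cs2' (@ktilde_lift 2 l2' H2' grp2 cg2 Hg2) //.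
  by rewrite /kreq; case: (val j) => [|[|v]].
by [].
Qed.

Lemma mg_exch_n (kr : 'I_M -> nat) S grp Gs C0 n (Hn : ksum kr Gs = n)
  (cs cs' : n.-tuple T) (a : T -> option 'I_n) :
  #|Gs| != 1%N -> greedy dd S C0 cs -> closest_assign dd S C0 cs a ->
  exchange S grp Gs kr a cs cs' -> exG S grp Gs kr a cs' = set0 ->
  multigroup dd kr S grp Gs C0 (centers cs').
Proof. move: a cs cs'; subst n => a cs cs'; exact: mg_exch. Qed.

Lemma mg_rec_n (kr : 'I_M -> nat) S grp Gs C0 n (Hn : ksum kr Gs = n)
  (cs cs' : n.-tuple T) (a : T -> option 'I_n) G grp' CR (E : 'I_M -> {set T}) :
  #|Gs| != 1%N -> greedy dd S C0 cs -> closest_assign dd S C0 cs a ->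
  exchange S grp Gs kr a cs cs' -> exG S grp Gs kr a cs' = G -> G != set0 ->
  (forall x, x \in Cprime grp cs' G :|: C0 -> grp' x \in G) ->
  (forall x, x \notin Cprime grp cs' G :|: C0 -> grp' x = grp x) ->
  multigroup dd kr (Sprime S grp a cs' G :|: Cprime grp cs' G :|: C0) grp' G
             (Cprime grp cs' G :|: C0) CR ->
  (forall j, j \in Gs :\: G ->
     E j \subset grpset S grp j :\: Cprime grp cs' G /\
     #|E j| = (kr j - #|Cprime grp cs' G :&: grpset S grp j|)%N) ->
  multigroup dd kr S grp Gs C0 (CR :|: Cprime grp cs' G :|: \bigcup_(j in Gs :\: G) E j).
Proof. move: a cs cs'; subst n => a cs cs'; exact: mg_rec. Qed.

Lemma ksumGG : ksum kreq GG = 2%N.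
Proof.
rewrite /ksum big_setU1 ?big_set1 //= inE -val_eqE //.
Qed.

Lemma ksumT : ksum kreq [set: 'I_M] = 5%N.
Proof.
rewrite /ksum (eq_bigl (fun _ => true)); last by move=> j; rewrite inE.
rewrite !big_ord_recl big1 //= => i _.
by rewrite /kreq /= nth_nil.
Qed.

Lemma mg2 : multigroup dd kreq (lift S2) grp2 GG (lift A02) (centers cs2').
Proof.
apply: (@mg_exch_n kreq (lift S2) grp2 GG (lift A02) 2 ksumGG cs2 cs2' a2).
- by rewrite cards2 -val_eqE.
- exact: greedy2.
- exact: closest2.
- exact: exchange2.
- exact: exG2.
Qed.

Lemma Cp1 : Cprime grp1 cs1' GG = liftN (fun n => n == 3%N).
Proof.
rewrite /cs1' (@Cprime_lift 5 l1' H1' grp1 cg Hg1 GG (fun v => v < 2)%N inGG) //.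
apply/setP => x; rewrite !inE; case: x => [c|] //=.
apply/eqP; apply: (@all8 (fun n => ((n \in l1') && ~~ (cg n < 2)%N) == (n == 3%N))).
exact: erefl.
Qed.

Lemma Sp1 : Sprime (lift predT) grp1 a1 cs1' GG = liftN (fun n => n \in [:: 7; 6; 5; 4]%N).
Proof.
rewrite /cs1' (@Sprime_lift 5 l1' H1' predT grp1 cg Hg1 GG (fun v => v < 2)%N inGG an1 a1 Ha1 Hr1) //.
apply/setP => x; rewrite !inE; case: x => [c|] //=.
apply/eqP; apply: (@all8 (fun n => (predT n && match an1 n with
                        | Some t => (t < 5)%N && (cg (nth 0%N l1' t) < 2)%N
                        | None => false end) == (n \in [:: 7; 6; 5; 4]%N))).
exact: erefl.
Qed.

Lemma C0'1 : Cprime grp1 cs1' GG :|: lift pred0 = lift A02.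
Proof. by rewrite Cp1; apply/setP => x; rewrite !inE; case: x => [c|] //=; rewrite orbF. Qed.

Lemma S'1 : Sprime (lift predT) grp1 a1 cs1' GG :|: Cprime grp1 cs1' GG :|: lift pred0 = lift S2.
Proof.
rewrite -setUA C0'1 Sp1; apply/setP => x; rewrite !inE; case: x => [c|] //=.
apply/eqP; apply: (@all8 (fun n => ((n \in [:: 7; 6; 5; 4]%N) || A02 n) == S2 n)).
exact: erefl.
Qed.

Definition Ef (j : 'I_M) : {set T} :=
  if val j == 2%N then liftN (fun n => (n == 1%N) || (n == 2%N)) else set0.

Lemma Econd (j : 'I_M) : j \in [set: 'I_M] :\: GG ->
  Ef j \subset grpset (lift predT) grp1 j :\: Cprime grp1 cs1' GG /\
  #|Ef j| = (kreq j - #|Cprime grp1 cs1' GG :&: grpset (lift predT) grp1 j|)%N.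
Proof.
rewrite in_setD in_setT andbT inGG Cp1 /Ef => Hj.
case: eqP => Ej.
  split.
    apply/subsetP => x; rewrite !inE; case: x => [c|] //= Hc.
    rewrite -val_eqE /= Ej.
    by move: Hc; move: (nat_of_ord c) => n /orP [] /eqP ->.
  rewrite card_liftN /kreq Ej.
  have -> : liftN (fun n => n == 3%N) :&: grpset (lift predT) grp1 j =
            liftN (fun n => (n == 3%N) && (cg n == 2%N)).
    apply/setP => x; rewrite !inE; case: x => [c|] //=.
    by rewrite -val_eqE /= Ej.
  by rewrite card_liftN.
split; first exact: sub0set.
rewrite cards0 /kreq; move: Hj Ej; case: (val j) => [|[|[|v]]] //=. by rewrite nth_nil.
Qed.

Lemma liftT : lift predT = [set: T].
Proof. by apply/setP => x; rewrite !inE; case: x. Qed.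

Definition CA : {set T} :=
  centers cs2' :|: Cprime grp1 cs1' GG :|: \bigcup_(j in [set: 'I_M] :\: GG) Ef j.

Lemma mg1 : multigroup dd kreq [set: T] grp1 [set: 'I_M] (lift pred0) CA.
Proof.
rewrite -liftT.
apply: (@mg_rec_n kreq (lift predT) grp1 [set: 'I_M] (lift pred0) 5 ksumT cs1 cs1' a1 GG grp2
          (centers cs2') Ef).
- by rewrite cardsT card_ord.
- exact: greedy1.
- exact: closest1.
- exact: exchange1.
- exact: exG1.
- by apply/set0Pn; exists gA; rewrite inGG.
- by move=> x; rewrite C0'1 inE inGG; case: x => [c|j] //= /eqP ->.
- move=> x; rewrite C0'1 inE; case: x => [c|j] //= Hc; apply: val_inj.
  by move: Hc; rewrite /= /cg2 /A02 => /negbTE ->.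
- by rewrite S'1 C0'1; exact: mg2.
- exact: Econd.
Qed.

Lemma CA_sub : CA :|: lift pred0 \subset lift (fun n => n \in [:: 5; 4; 3; 1; 2]%N).
Proof.
apply/subsetP => x; rewrite /CA !inE => /orP [/orP [/orP [|]|]|].
- move=> /imsetP [i _ ->]; rewrite /cs2' tnth_mkt /emb /= inordK ?(nth8 H2') //.
  exact: (@allk 2 (fun i => nth 0%N l2' i \in [:: 5; 4; 3; 1; 2]%N) (erefl _) i).
- by rewrite Cp1 inE; case: x => [c|] //= /eqP ->.
- move=> /bigcupP [j _]; rewrite /Ef; case: ifP => _; last by rewrite inE.
  by rewrite inE; case: x => [c|] //= /orP [] /eqP ->.
- by case: x.
Qed.

Lemma cost_CA : ole (Some 8%:R) (cost dd [set: T] (CA :|: lift pred0)).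
Proof.
apply: (@obigmax_ge R _ _ _ (emb 7)); first by rewrite inE.
apply: obigmin_ge => c Hc; have := subsetP CA_sub c Hc.
rewrite inE /dd /emb /= ler_nat; case: c {Hc} => [b|j] //=.
rewrite inordK //.
move=> Hb; have := @all8 (fun b => (b \in [:: 5; 4; 3; 1; 2]%N) ==> (8 <= Dn 7 b)%N) (erefl _) b.
by rewrite Hb.
Qed.

Definition Cstar : {set T} := liftN (fun n => n \in [:: 6; 7; 3; 1; 2]%N).

Lemma feas_star : feasible grp1 kreq Cstar.
Proof.
apply/forallP => j.
have -> : Cstar :&: [set x | grp1 x == j] =
          liftN (fun n => (n \in [:: 6; 7; 3; 1; 2]%N) && (cg n == val j)).
  apply/setP => x; rewrite !inE; case: x => [c|] //=.
rewrite card_liftN /kreq.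
case: (val j) => [|[|[|v]]] //; rewrite /= nth_nil; by vm_compute.
Qed.

Lemma dist_ge0 s A : ole (Some 0) (dist dd s A).
Proof. by apply: obigmin_ge => c _ /=; rewrite /dd ler0n. Qed.

Lemma rfair_bounds : ole (Some 0) (r_fair dd grp1 kreq (lift pred0)) /\
                     ole (r_fair dd grp1 kreq (lift pred0)) (Some 1).
Proof.
split.
  apply: obigmin_ge => C _.
  apply: (big_ind (fun o => ole (Some 0) o)).
  - exact: ole_refl.
  - by move=> x y Hx _; apply: ole_trans Hx (ole_maxl _ _).
  - by move=> s _; apply: dist_ge0.
apply: ole_trans (obigmin_le _ feas_star) _.
apply: obigmax_le => [|s _]; first by rewrite /= ler01.
have -> : Cstar :|: lift pred0 = lift (fun n => n \in [:: 6; 7; 3; 1; 2]%N).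
  by apply/setP => x; rewrite !inE; case: x => [c|] //=; rewrite orbF.
case: s => [c|j]; last by rewrite dist_lift_inr /= ler01.
rewrite dist_lift_inl /= -[1 : R]/((1%N)%:R) ler_nat.
exact: (@all8 (fun c => dm c (fun n => n \in [:: 6; 7; 3; 1; 2]%N) <= 1)%N (erefl _) c).
Qed.
End Inst.

Lemma final_ineq (R : realFieldType) (eps : R) (rf c : option R) :
  0 < eps -> ole (Some 0) rf -> ole rf (Some 1) -> ole (Some 8%:R) c ->
  olt (oscale (8 - eps) rf) c.
Proof.
move=> He; case: rf => [r|] //= H0 H1; case: c => [w|] //= Hw.
apply: (lt_le_trans _ Hw).
case: (lerP eps 8%:R) => He8.
  apply: (@le_lt_trans _ _ (8%:R - eps)).
    rewrite -[X in _ <= X]mulr1; apply: ler_wpM2l => //; by rewrite subr_ge0.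
  by rewrite ltrBlDr ltrDl.
apply: (@le_lt_trans _ _ 0); last by rewrite ltr0n.
apply: mulr_le0_ge0 => //; rewrite subr_le0; exact: ltW.
Qed.

Theorem lemma3 (R : realFieldType) (m : nat) (eps : R) :
  (3 <= m)%N -> 0 < eps ->
  exists (T : finType) (d : T -> T -> R) (grp : T -> 'I_m)
         (kreq : 'I_m -> nat) (C0 CA : {set T}),
    [/\ is_metric d,
        forall j : 'I_m, exists x : T, grp x = j,
        multigroup d kreq [set: T] grp [set: 'I_m] C0 CA
      & olt (oscale (8 - eps) (r_fair d grp kreq C0))
            (cost d [set: T] (CA :|: C0))].
Proof.
case: m => [|[|[|m']]] // _ Heps.
exists ('I_8 + 'I_m'.+3)%type, (@dd R m'), (@grp1 m'), (@kreq m'), (@lift m' pred0), (@CA m').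
split.
- exact: dd_metric.
- by move=> j; exists (inr j).
- exact: mg1.
- have [H0 H1] := @rfair_bounds R m'.
  exact: final_ineq Heps H0 H1 (@cost_CA R m').
Qed.
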